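(* If $G$ and $H$ are Left dead-ends, then $b(G+H)=b(G)+b(H)$.
   Context: Games are finite partizan games; $o(G)$ is the misère outcome class (ordered $\mathscr{L}>\mathscr{N}>\mathscr{R}$, $\mathscr{L}>\mathscr{P}>\mathscr{R}$). A universe is a set of games closed under options, disjunctive sums, conjugates, and forming $\{\mathscr{G}^L\mid\mathscr{G}^R\}$ from nonempty finite subsets of it; $G\geq_\mathcal{U}H$ means $o(G+X)\geq o(H+X)$ for all $X\in\mathcal{U}$. A Left dead-end is a game all of whose subpositions have no Left option. For Left dead-ends, $G\geq H$ means $G\geq_\mathcal{U}H$ for every universe $\mathcal{U}$, and $G=H$ means $G\geq H$ and $H\geq G$. The birthday $b(G)$ of a Left dead-end $G$ is the minimum height of the game tree of a Left dead-end $K$ with $K=G$. *)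

(* Defs.v *)
From Stdlib Require List.
From Stdlib Require Import ClassicalEpsilon.
From mathcomp Require Import all_boot.


Set Implicit Arguments.
Unset Strict Implicit.
Unset Printing Implicit Defensive.

Inductive game : Type := Game : seq game -> seq game -> game.

Definition leftOpts (G : game) : seq game := let: Game L _ := G in L.
Definition rightOpts (G : game) : seq game := let: Game _ R := G in R.

Definition is_option (G' G : game) : Prop :=
  List.In G' (leftOpts G) \/ List.In G' (rightOpts G).

(* Disjunctive sum: G + H = {G^L + H, G + H^L | G^R + H, G + H^R}. *)
Fixpoint gadd (G H : game) {struct G} : game :=
  match G with
  | Game GL GR =>
    let fix addH (H : game) : game :=
      match H with
      | Game HL HR =>
        Game (map (fun gl => gadd gl H) GL ++ map addH HL)
             (map (fun gr => gadd gr H) GR ++ map addH HR)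
      end in
    addH H
  end.

Fixpoint gconj (G : game) : game :=
  match G with Game L R => Game (map gconj R) (map gconj L) end.

(* Misere play: a player with no move on their turn wins.
   wins G = (Left wins moving first on G, Right wins moving first on G). *)
Fixpoint wins (G : game) : bool * bool :=
  match G with
  | Game L R =>
    (nilp L || has (fun g => ~~ (wins g).2) L,
     nilp R || has (fun g => ~~ (wins g).1) R)
  end.

Inductive outcome : Type := oL | oN | oP | oR.

Definition misere_outcome (G : game) : outcome :=
  match wins G with
  | (true, false) => oL
  | (true, true) => oN
  | (false, false) => oP
  | (false, true) => oR
  end.

Definition outcome_ge (o1 o2 : outcome) : Prop :=
  match o1, o2 with
  | oL, _ => True
  | oN, oN | oN, oR => True
  | oP, oP | oP, oR => True
  | oR, oR => True
  | _, _ => False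
  end.

Definition universe (U : game -> Prop) : Prop :=
  [/\ (forall G G', U G -> is_option G' G -> U G'),
      (forall G H, U G -> U H -> U (gadd G H)),
      (forall G, U G -> U (gconj G)) &
      (forall A B : seq game, A <> [::] -> B <> [::] ->
         (forall g, List.In g A -> U g) -> (forall g, List.In g B -> U g) ->
         U (Game A B))].

Definition ge_in (U : game -> Prop) (G H : game) : Prop :=
  forall X, U X -> outcome_ge (misere_outcome (gadd G X)) (misere_outcome (gadd H X)).

Definition dge (G H : game) : Prop := forall U, universe U -> ge_in U G H.
Definition deq (G H : game) : Prop := dge G H /\ dge H G.

Fixpoint left_dead_end (G : game) : bool :=
  match G with Game L R => nilp L && all left_dead_end R end.

Fixpoint height (G : game) : nat :=
  match G with
  | Game L R =>
    maxn (foldr maxn 0 (map (fun g => (height g).+1) L))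
         (foldr maxn 0 (map (fun g => (height g).+1) R))
  end.

Definition bday_witness (G : game) (n : nat) : Prop :=
  exists K, left_dead_end K /\ deq K G /\ height K = n.

Definition bday_pred (G : game) : pred nat :=
  fun n => if excluded_middle_informative (bday_witness G n) then true else false.

Lemma bday_pred_ex (G : game) :
  (exists n, bday_witness G n) -> exists n, bday_pred G n.
Proof.
case=> n Hn; exists n; rewrite /bday_pred.
by case: (excluded_middle_informative (bday_witness G n)).
Qed.

(* Birthday b(G): least height of a Left dead-end K with K = G
   (0 by convention if no such K exists; never used in that case). *)
Definition birthday (G : game) : nat :=
  match excluded_middle_informative (exists n, bday_witness G n) with
  | left e => ex_minn (bday_pred_ex e)
  | right _ => 0
  end.

(* Main.v *)
Require Import Defs.
From mathcomp Require Import all_boot.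
From Stdlib Require List.
From Stdlib Require Import ClassicalEpsilon.
From mathcomp Require Import zify.

Set Implicit Arguments.
Unset Strict Implicit.
Unset Printing Implicit Defensive.

Definition game_ind' (P : game -> Prop)
  (H : forall L R, (forall g, List.In g L -> P g) -> (forall g, List.In g R -> P g) -> P (Game L R)) :
  forall G, P G :=
  fix F G := match G with Game L R =>
    H L R
      ((fix aux (l : seq game) : forall g, List.In g l -> P g :=
         match l with
         | nil => fun g (h : List.In g nil) => False_ind _ h
         | cons x l' => fun g h => match h with
             | or_introl e => eq_ind x P (F x) g e
             | or_intror h' => aux l' g h' end end) L)
      ((fix aux (l : seq game) : forall g, List.In g l -> P g :=
         match l with
         | nil => fun g (h : List.In g nil) => False_ind _ h
         | cons x l' => fun g h => match h with
             | or_introl e => eq_ind x P (F x) g e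
             | or_intror h' => aux l' g h' end end) R)
  end.

Lemma gaddE GL GR X : gadd (Game GL GR) X =
  Game (map (fun gl => gadd gl X) GL ++ map (gadd (Game GL GR)) (leftOpts X))
       (map (fun gr => gadd gr X) GR ++ map (gadd (Game GL GR)) (rightOpts X)).
Proof. by case: X. Qed.

Lemma allIn (p : pred game) l : all p l <-> forall x, List.In x l -> p x.
Proof.
elim: l => [|x l IH] /=; first by split.
split.
- move/andP=> [px /IH H] y [<-|Hy]; [exact: px| exact: H].
- move=> H; apply/andP; split; first by apply: H; left.
  by apply/IH => y Hy; apply: H; right.
Qed.

Lemma hasIn (p : pred game) l : has p l <-> exists x, List.In x l /\ p x.
Proof.
elim: l => [|x l IH] /=; first by split => // [[x []]].
split.
- case/orP => [px|/IH [y [Hy py]]]; first by exists x; split => //; left.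
  by exists y; split => //; right.
- move=> [y [[<-|Hy] py]]; first by rewrite py.
  by apply/orP; right; apply/IH; exists y.
Qed.

Lemma hasNIn (p : pred game) l : (forall x, List.In x l -> p x = false) -> has p l = false.
Proof.
move=> H; apply/negbTE/negP => /hasIn [x [Hx px]].
by rewrite H in px.
Qed.

Definition F (l : seq game) := foldr maxn 0 (map (fun g => (height g).+1) l).

Lemma heightE L R : height (Game L R) = maxn (F L) (F R).
Proof. by []. Qed.

Lemma F_in l g : List.In g l -> (height g).+1 <= F l.
Proof.
elim: l => [|x l IH] //= [->|Hg]; rewrite /F /=; first by rewrite leq_max leqnn.
by rewrite leq_max (IH Hg) orbT.
Qed.

Lemma F_ex l : 0 < F l -> exists g, List.In g l /\ (height g).+1 = F l.
Proof.
elim: l => [|x l IH] //=; rewrite /F /= -/(F l) => Hpos.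
case: (leqP (F l) (height x).+1) => Hle.
- exists x; split; first by left. lia.
- have [g [Hg Hh]] : exists g, List.In g l /\ (height g).+1 = F l by apply: IH; lia.
  exists g; split; first by right. lia.
Qed.

Lemma F_cat a b : F (a ++ b) = maxn (F a) (F b).
Proof.
elim: a => [|x a IH]; first by rewrite /= max0n.
by rewrite /F /= -/(F (a ++ b)) -/(F a) IH maxnA.
Qed.

Lemma F_shift (f : game -> game) c l :
  (forall x, List.In x l -> height (f x) = height x + c) ->
  F (map f l) = if l is [::] then 0 else F l + c.
Proof.
elim: l => [|x l IH] //= H.
rewrite /F /= -/(F (map f l)) -/(F l) IH; last by move=> y Hy; apply: H; right.
rewrite H; last by left.
case: l {IH H} => [|y l]; first by rewrite /F /=; lia.
lia.
Qed.

Lemma deadE G : left_dead_end G ->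
  exists R, G = Game [::] R /\ forall g, List.In g R -> left_dead_end g.
Proof.
case: G => [[|x L] R] //= /allIn H.
by exists R.
Qed.

Lemma dead_game R : (forall g, List.In g R -> left_dead_end g) -> left_dead_end (Game [::] R).
Proof. by move=> H /=; apply/allIn. Qed.

Lemma deadE2 L R : left_dead_end (Game L R) -> L = [::] /\ forall g, List.In g R -> left_dead_end g.
Proof. by case: L => [|x L] //= /allIn H. Qed.

Lemma gaddE2 GL GR HL HR : gadd (Game GL GR) (Game HL HR) =
  Game (map (fun gl => gadd gl (Game HL HR)) GL ++ map (gadd (Game GL GR)) HL)
       (map (fun gr => gadd gr (Game HL HR)) GR ++ map (gadd (Game GL GR)) HR).
Proof. by []. Qed.

Lemma sum_lem G : left_dead_end G -> forall H, left_dead_end H ->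
  height (gadd G H) = height G + height H /\ left_dead_end (gadd G H).
Proof.
elim/game_ind': G => GL GR _ IHG /deadE2 [-> dR].
elim/game_ind' => HL HR _ IHH /deadE2 [-> dR'].
rewrite gaddE2 cats0.
split.
- rewrite heightE F_cat (F_shift (l := GR) (c := height (Game [::] HR))); last first.
    by move=> x Hx; case: (IHG x Hx (dR x Hx) (Game [::] HR)) => //; apply: dead_game.
  rewrite (F_shift (l := HR) (c := height (Game [::] GR))); last first.
    by move=> x Hx; case: (IHH x Hx (dR' x Hx)) => -> _; rewrite addnC.
  rewrite !heightE /F /=.
  clear IHG IHH dR dR'.
  case: GR => [|x R]; case: HR => [|y R'] /=; lia.
- apply: dead_game => x /List.in_app_iff [] /List.in_map_iff [y [<- Hy]].
  + by case: (IHG y Hy (dR y Hy) (Game [::] HR)) => //; apply: dead_game.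
  + by case: (IHH y Hy (dR' y Hy)).
Qed.

Definition zero := Game [::] [::].
Fixpoint intL (m : nat) : game :=
  match m with 0 => zero | m'.+1 => Game [:: intL m'] [::] end.
Fixpoint T (m k : nat) : game :=
  match k with 0 => Game [:: intL m] [:: zero] | k'.+1 => Game [:: T m k'] [:: zero] end.

Lemma winsE L R : wins (Game L R) =
  (nilp L || has (fun g => ~~ (wins g).2) L, nilp R || has (fun g => ~~ (wins g).1) R).
Proof. by []. Qed.

Lemma height_opt R g : List.In g R -> height g < height (Game [::] R).
Proof. by move=> Hg; rewrite heightE max0n; apply: F_in. Qed.

Lemma intL_lem j : forall G, left_dead_end G ->
  (height G <= j -> (wins (gadd G (intL j))).2 = true) /\
  (height G < j -> (wins (gadd G (intL j))).1 = false).
Proof.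
elim: j => [|j IH].
- case=> L R /deadE2 [-> dR]; split => //.
  rewrite heightE max0n; case: R dR => [|x R] dR; last by rewrite /F /=; lia.
  by [].
- have LL : forall G, left_dead_end G -> height G < j.+1 -> (wins (gadd G (intL j.+1))).1 = false.
    case=> L R /deadE2 [-> dR] Hh.
    rewrite gaddE2 winsE /=.
    by rewrite (proj1 (IH (Game [::] R) (dead_game dR))).
  case=> L R /deadE2 [-> dR]; split; last exact: LL (dead_game dR).
  move=> Hh; rewrite gaddE2 winsE /= cats0.
  case: R dR Hh => [|x R] dR Hh //=.
  rewrite LL //; first by apply: dR; left.
  by have := height_opt (R := x :: R) (or_introl erefl); lia.
Qed.

Lemma zero_sum G : left_dead_end G -> (wins (gadd G zero)).1 = true.
Proof. by case: G => L R /deadE2 [-> _]. Qed.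

Lemma T_win m k : forall G, left_dead_end G ->
  (height G < k -> (wins (gadd G (T m k))).1 = true) /\
  (height G <= k -> (wins (gadd G (T m k))).2 = false).
Proof.
have Q : forall k, (forall G, left_dead_end G -> height G < k -> (wins (gadd G (T m k))).1 = true) ->
   forall G, left_dead_end G -> height G <= k -> (wins (gadd G (T m k))).2 = false.
  move=> k0 P; case=> L R /deadE2 [-> dR] Hh.
  case: k0 P Hh => [|k0] P Hh; rewrite gaddE2 winsE /=;
  (rewrite hasNIn; [by rewrite orbF /nilp size_cat addn1 | move=> x /List.in_app_iff [/List.in_map_iff [y [<- Hy]]|[<-|[]]];
   [ apply/negbF; apply: P; [exact: dR| have := height_opt Hy; lia]
   | by apply/negbF]]).
elim: k => [|k IH].
- move=> G dG; split => //; exact: Q.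
- have P : forall G, left_dead_end G -> height G < k.+1 -> (wins (gadd G (T m k.+1))).1 = true.
    case=> L R /deadE2 [-> dR] Hh.
    rewrite gaddE2 winsE /=.
    by rewrite (proj2 (IH (Game [::] R) (dead_game dR))).
  move=> G dG; split; [exact: P | exact: Q].
Qed.

Lemma T_lose m k : forall G, left_dead_end G -> height G <= m ->
  (k <= height G -> (wins (gadd G (T m k))).1 = false) /\
  (k < height G -> (wins (gadd G (T m k))).2 = true).
Proof.
have Q : forall k, (forall G, left_dead_end G -> height G <= m -> k <= height G -> (wins (gadd G (T m k))).1 = false) ->
   forall G, left_dead_end G -> height G <= m -> k < height G -> (wins (gadd G (T m k))).2 = true.
  move=> k0 P; case=> L R /deadE2 [-> dR] Hm Hh.
  have [g [Hg Hgh]] : exists g, List.In g R /\ (height g).+1 = F R.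
    by apply: F_ex; move: Hh; rewrite heightE max0n; lia.
  case: k0 P Hh => [|k0] P Hh; rewrite gaddE2 winsE /=.
  (apply/orP; right; apply/hasIn; exists (gadd g (T m 0)); split;
   [ by apply/List.in_app_iff; left; apply/List.in_map_iff; exists g
   | apply: negbT; apply: P; [exact: dR| move: Hh Hm; rewrite heightE max0n; lia
                                  | move: Hh; rewrite heightE max0n; lia]]).
    (apply/orP; right; apply/hasIn; exists (gadd g (T m k0.+1)); split;
   [ by apply/List.in_app_iff; left; apply/List.in_map_iff; exists g
   | apply: negbT; apply: P; [exact: dR| move: Hh Hm; rewrite heightE max0n; lia
                                  | move: Hh; rewrite heightE max0n; lia]]).
elim: k => [|k IH].
- have P : forall G, left_dead_end G -> height G <= m -> 0 <= height G -> (wins (gadd G (T m 0))).1 = false.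
    case=> L R /deadE2 [-> dR] Hm _.
    rewrite gaddE2 winsE /=.
    by rewrite (proj1 (intL_lem m (dead_game dR))).
  move=> G dG Hm; split; [exact: P | exact: Q].
- have P : forall G, left_dead_end G -> height G <= m -> k.+1 <= height G -> (wins (gadd G (T m k.+1))).1 = false.
    case=> L R /deadE2 [-> dR] Hm Hh.
    rewrite gaddE2 winsE /=.
    by rewrite (proj2 (IH (Game [::] R) (dead_game dR) Hm)).
  move=> G dG Hm; split; [exact: P | exact: Q].
Qed.

Lemma univ_all : universe (fun _ => True).
Proof. by split. Qed.

Lemma outcome_ge_l A B : outcome_ge (misere_outcome A) (misere_outcome B) ->
  (wins B).1 -> (wins A).1.
Proof.
rewrite /misere_outcome.
by case: (wins A) => [[] []]; case: (wins B) => [[] []].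
Qed.

Lemma outcome_ge_refl o : outcome_ge o o.
Proof. by case: o. Qed.

Lemma dge_height K G : left_dead_end K -> left_dead_end G -> dge K G -> height K <= height G.
Proof.
move=> dK dG Hge.
have := Hge _ univ_all (T (height K) (height G).+1) I => /outcome_ge_l.
rewrite (proj1 (T_win (height K) (height G).+1 dG)) // => /(_ isT) HK.
case: (leqP (height G).+1 (height K)) => // Hlt.
by rewrite (proj1 (T_lose (height G).+1 dK (leqnn _)) Hlt) in HK.
Qed.

Lemma birthday_height G : left_dead_end G -> birthday G = height G.
Proof.
move=> dG.
have W : forall n, bday_witness G n <-> n = height G.
  move=> n; split.
  - move=> [K [dK [[H1 H2] <-]]].
    by apply/eqP; rewrite eqn_leq !dge_height.
  - move=> ->; exists G; split => //; split => //; split => U _ X _; exact: outcome_ge_refl.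
rewrite /birthday.
case: excluded_middle_informative => [e|ne]; last first.
  by exfalso; apply: ne; exists (height G); apply/W.
case: ex_minnP => n Hn Hmin.
move: Hn; rewrite /bday_pred.
case: excluded_middle_informative => // Hw _.
by apply/W.
Qed.

Theorem mainTheorem13 (G H : game) :
  left_dead_end G -> left_dead_end H ->
  birthday (gadd G H) = birthday G + birthday H.
Proof.
move=> dG dH.
have [Hh Hd] := sum_lem dG dH.
by rewrite !birthday_height.
Qed.
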